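(* Let $G$ be a connected graph of order $n\geq 3$ and let $g:A\rightarrow B$ be any function. Then $0\leq fix(F_G)\leq 2n-3$. Both bounds are sharp, i.e. each is attained for some connected graph $G$ of order $n\ge 3$ and some function $g$.
   Context: All graphs are simple, finite, nontrivial and connected. For a graph $H$, an automorphism is a bijection $\alpha:V(H)\to V(H)$ with $\alpha(u)\alpha(v)\in E(H)$ iff $uv\in E(H)$. A set $S\subseteq V(H)$ is a fixing set of $H$ if the only automorphism of $H$ fixing every vertex of $S$ is the identity; the fixing number $fix(H)$ is the minimum cardinality of a fixing set of $H$. Functigraph: let $G_1,G_2$ be disjoint copies of a connected graph $G$, with $A=V(G_1)$, $B=V(G_2)$, and let $g:A\to B$ be a function. The functigraph $F_G$ (which depends on $g$) has vertex set $A\cup B$ and edge set $E(G_1)\cup E(G_2)\cup\{ug(u):u\in A\}$. *)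

(* Defs.v *)
From mathcomp Require Import all_boot all_fingroup.
Set Implicit Arguments. Unset Strict Implicit. Unset Printing Implicit Defensive.

Definition connected_graph (n : nat) (e : rel 'I_n) : Prop :=
  symmetric e /\ irreflexive e /\ (forall x y : 'I_n, connect e x y).

(* Functigraph F_G: vertices inl a (copy G1, set A) and inr b (copy G2, set B);
   edges of G1, edges of G2, and the edges a -- g(a). *)
Definition functigraph (n : nat) (e : rel 'I_n) (g : 'I_n -> 'I_n)
  : rel ('I_n + 'I_n)%type :=
  fun u v =>
    match u, v with
    | inl a, inl b => e a b
    | inr a, inr b => e a b
    | inl a, inr b => g a == b
    | inr b, inl a => g a == b
    end.

Definition is_aut (T : finType) (r : rel T) (p : {perm T}) : bool :=
  [forall u, forall v, r (p u) (p v) == r u v].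

Definition fixing_set (T : finType) (r : rel T) (S : {set T}) : bool :=
  [forall p : {perm T}, (is_aut r p && [forall x in S, p x == x]) ==> (p == 1%g)].

(* fixing number: minimum cardinality of a fixing set (V itself is one) *)
Definition fix_number (T : finType) (r : rel T) : nat :=
  \big[minn/#|T|]_(S : {set T} | fixing_set r S) #|S|.

(* Main.v *)
Require Import Defs.
From mathcomp Require Import all_boot all_fingroup.
From mathcomp Require Import zify.
Set Implicit Arguments. Unset Strict Implicit. Unset Printing Implicit Defensive.

Lemma fix_le (T : finType) (r : rel T) (S : {set T}) :
  fixing_set r S -> fix_number r <= #|S|.
Proof.
move=> HS; rewrite /fix_number.
have : S \in index_enum {set T} by rewrite mem_index_enum.
elim: (index_enum _) => [|y s IH] //=; rewrite inE => /orP [/eqP <-|Hs].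
  by rewrite big_cons HS geq_minl.
rewrite big_cons; case: ifP => _ //.
by apply: leq_trans (geq_minr _ _) (IH Hs).
by apply: IH.
Qed.

Lemma fix_ge (T : finType) (r : rel T) k :
  k <= #|T| -> (forall S : {set T}, fixing_set r S -> k <= #|S|) ->
  k <= fix_number r.
Proof.
move=> HT HS; rewrite /fix_number.
apply: (big_ind (fun m => k <= m)) => //.
  by move=> x y Hx Hy; rewrite leq_min Hx Hy.
Qed.

Lemma aut_rel (T : finType) (r : rel T) (p : {perm T}) u v :
  is_aut r p -> r (p u) (p v) = r u v.
Proof. by move=> /forallP/(_ u)/forallP/(_ v)/eqP. Qed.

Lemma fixing_setP (T : finType) (r : rel T) (S : {set T}) :
  (forall p : {perm T}, is_aut r p -> (forall x, x \in S -> p x = x) -> forall x, p x = x) ->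
  fixing_set r S.
Proof.
move=> H; apply/forallP => p; apply/implyP => /andP [Ha /forallP Hf].
apply/eqP/permP => x; rewrite perm1; apply: H => // y Hy.
by apply/eqP; move: (Hf y); rewrite Hy.
Qed.

Lemma fix_by_witness (T : finType) (r : rel T) (U : {set T}) :
  (forall u v, u \in U -> v \in U -> u != v -> exists w, w \notin U /\ r u w != r v w) ->
  fixing_set r (~: U).
Proof.
move=> HW; apply: fixing_setP => p Ha Hf x.
case: (boolP (x \in U)) => Hx; last by apply: Hf; rewrite inE Hx.
have HpU : p x \in U.
  apply/negPn/negP => Hn.
  have : p (p x) = p x by apply: Hf; rewrite inE Hn.
  by move/perm_inj => E; rewrite E Hx in Hn.
apply/eqP/negPn/negP => Hne.
have [w [Hw Hr]] := HW _ _ HpU Hx Hne.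
have Ew : p w = w by apply: Hf; rewrite inE Hw.
by move: Hr; rewrite -{1}Ew aut_rel // eqxx.
Qed.

Lemma exists_other n (a b : 'I_n) : 2 < n -> exists z : 'I_n, z != a /\ z != b.
Proof.
move=> Hn.
have : 0 < #|~: [set a; b]|.
  by rewrite cardsCs setCK card_ord cards2; case: (a != b); rewrite subn_gt0 // ltnW.
case/card_gt0P => z; rewrite !inE negb_or => /andP [H1 H2]; by exists z.
Qed.

Lemma has_nbr n (e : rel 'I_n) x y : connected_graph e -> x != y -> exists b, e x b.
Proof.
move=> [_ [_ Hc]] Hxy; have /connectP [p Hp Hl] := Hc x y.
case: p Hp Hl => [|b p] /=; first by move=> _ E; rewrite E eqxx in Hxy.
by case/andP => Hb _ _; exists b.
Qed.


Lemma card3 (T : finType) (x y z : T) : x != y -> x != z -> y != z -> #|[set x; y; z]| = 3.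
Proof.
move=> H1 H2 H3; rewrite -setUA cardsU1 cards2 H3 !inE negb_or H1 H2 //.
Qed.

Lemma card_compl3 n (x y z : ('I_n + 'I_n)%type) :
  x != y -> x != z -> y != z -> #|~: [set x; y; z]| = 2 * n - 3.
Proof.
move=> H1 H2 H3; rewrite cardsCs setCK card3 // card_sum card_ord.
by rewrite mul2n -addnn.
Qed.

Lemma eq_ll (A B : eqType) (a a' : A) : (@inl A B a == inl a') = (a == a').
Proof. by apply/eqP/eqP => [[]|->]. Qed.
Lemma eq_rr (A B : eqType) (b b' : B) : (@inr A B b == inr b') = (b == b').
Proof. by apply/eqP/eqP => [[]|->]. Qed.
Lemma eq_lr (A B : eqType) (a : A) (b : B) : (inl a == inr b) = false.
Proof. by []. Qed.
Lemma eq_rl (A B : eqType) (a : A) (b : B) : (inr b == inl a) = false.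
Proof. by []. Qed.

Lemma upper n (e : rel 'I_n) (g : 'I_n -> 'I_n) :
  3 <= n -> connected_graph e -> fix_number (functigraph e g) <= 2 * n - 3.
Proof.
move=> Hn Hc.
case: (boolP [exists x1, exists x2, g x1 != g x2]).
  case/existsP => x1 /existsP [x2 Hx].
  have [z [Hz1 Hz2]] := exists_other (g x1) (g x2) Hn.
  rewrite -(@card_compl3 n (inr (g x1)) (inr (g x2)) (inr z)) //; last first.
  - by rewrite /= eq_sym.  - by rewrite /= eq_sym.
  have E1 := negbTE Hx; have E2 := negbTE Hz1; have E3 := negbTE Hz2.
  have E4 : (g x2 == g x1) = false by rewrite eq_sym.
  have E5 : (g x1 == z) = false by rewrite eq_sym.
  have E6 : (g x2 == z) = false by rewrite eq_sym.
  apply: fix_le; apply: fix_by_witness => u v.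
  rewrite !inE -!orbA => /or3P [] /eqP -> /or3P [] /eqP -> //= Hne.
  all: try by rewrite eqxx in Hne.
  all: first [ exists (inl x1); split; rewrite ?inE /= ?eqxx ?E1 ?E2 ?E3 ?E4 ?E5 ?E6 //; fail
              | exists (inl x2); split; rewrite ?inE /= ?eqxx ?E1 ?E2 ?E3 ?E4 ?E5 ?E6 //; fail | idtac ].
  all: idtac.
move/existsPn => Hall.
have x0 : 'I_n by apply: (@Ordinal n 0); apply: leq_trans Hn.
set c := g x0.
have Hg : forall x, g x = c.
  move=> x; move: (Hall x) => /existsPn /(_ x0) /negPn /eqP //.
have [y [Hy _]] := exists_other c c Hn.
have [b Hb] : exists b, e c b by apply: (@has_nbr n e c y Hc); rewrite eq_sym.
have Hbc : (b == c) = false.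
  by apply/negbTE/negP => /eqP E; move: Hb; rewrite E; case: Hc => _ [Hi _]; rewrite Hi.
have Hcb : (c == b) = false by rewrite eq_sym.
have [z [Hzb Hzc]] := exists_other b c Hn.
have Ezb := negbTE Hzb; have Ezc := negbTE Hzc.
have Ebz : (b == z) = false by rewrite eq_sym.
have Ecz : (c == z) = false by rewrite eq_sym.
rewrite -(@card_compl3 n (inl c) (inr z) (inr c)) //; try by rewrite eq_rr Ezc.
apply: fix_le; apply: fix_by_witness => u v.
rewrite !inE -!orbA => /or3P [] /eqP -> /or3P [] /eqP -> //= Hne.
all: try by rewrite eqxx in Hne.
all: first [ exists (inl b); split; rewrite ?inE /= ?eq_ll ?eq_rr ?eq_lr ?eq_rl ?Hg ?eqxx ?Hb ?Hbc ?Hcb ?Ezb ?Ezc ?Ebz ?Ecz //; fail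
           | exists (inr b); split; rewrite ?inE /= ?eq_ll ?eq_rr ?eq_lr ?eq_rl ?Hg ?eqxx ?Hb ?Hbc ?Hcb ?Ezb ?Ezc ?Ebz ?Ecz //; fail ].
Qed.


Lemma leq_cardU (T : finType) (A B : {set T}) : #|A :|: B| <= #|A| + #|B|.
Proof. by rewrite -cardsUI leq_addr. Qed.

Lemma twin_aut (T : finType) (r : rel T) (u v : T) :
  symmetric r -> r u u = r v v ->
  (forall w, w != u -> w != v -> r u w = r v w) -> is_aut r (tperm u v).
Proof.
move=> Hs Huv Ht; apply/forallP => x; apply/forallP => y; apply/eqP.
case: tpermP => [->|->|/eqP Hxu /eqP Hxv]; case: tpermP => [->|->|/eqP Hyu /eqP Hyv] //.
- by rewrite Ht.
- by rewrite Ht.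
- by rewrite (Hs x v) (Hs x u) Ht.
- by rewrite (Hs x v) (Hs x u) Ht.
Qed.

Lemma twin_notfix (T : finType) (r : rel T) (u v : T) (S : {set T}) :
  is_aut r (tperm u v) -> u != v -> u \notin S -> v \notin S -> ~~ fixing_set r S.
Proof.
move=> Ha Huv Hu Hv; apply/forallPn; exists (tperm u v); rewrite negb_imply Ha /=.
apply/andP; split.
  apply/forallP => x; apply/implyP => Hx; apply/eqP; apply: tpermD.
    by apply: contra Hu => /eqP ->.
  by apply: contra Hv => /eqP ->.
apply/negP => /eqP E; move: (tpermL u v); rewrite E perm1 => E'.
by rewrite E' eqxx in Huv.
Qed.

Lemma fg_sym n (e : rel 'I_n) g : symmetric e -> symmetric (functigraph e g).
Proof. by move=> Hs [a|a] [b|b] //=; rewrite Hs. Qed.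

Lemma ex_max n : 3 <= n ->
  exists (e : rel 'I_n) (g : 'I_n -> 'I_n),
    connected_graph e /\ fix_number (functigraph e g) = 2 * n - 3.
Proof.
move=> Hn.
have c : 'I_n := Ordinal (leq_trans (isT : 0 < 3) Hn).
pose e := fun x y : 'I_n => x != y.
have Hes : symmetric e by move=> x y; rewrite /e eq_sym.
have Hc : connected_graph e.
  split; [done | split; [by move=> x; rewrite /e eqxx|]].
  move=> x y; case: (eqVneq x y) => [->|H]; [exact: connect0 | exact: connect1].
exists e, (fun _ => c); split => //.
apply/eqP; rewrite eqn_leq upper //=.
apply: fix_ge; first by rewrite card_sum card_ord; lia.
move=> S HS; rewrite leqNgt; apply/negP => Hlt.
set SA := [set a | inl a \notin S].
set SB := [set b | (b != c) && (inr b \notin S)].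
have Hs := fg_sym (fun _ => c) Hes.
case: (ltnP 1 #|SA|) => [/card_gt1P [a [a' [Ha Ha' Hne]]] | HA].
  move: HS; apply/negP; apply: (@twin_notfix _ _ (inl a) (inl a')).
  - apply: twin_aut => //; first by rewrite /= /e !eqxx.
    move=> [x|x] H1 H2 //=; rewrite eq_ll in H1; rewrite eq_ll in H2.
    by rewrite /e (eq_sym a) (eq_sym a') (negbTE H1) (negbTE H2).
  - by rewrite eq_ll.
  - by move: Ha; rewrite inE.
  - by move: Ha'; rewrite inE.
case: (ltnP 1 #|SB|) => [/card_gt1P [b [b' [Hb Hb' Hne]]] | HB].
  move: Hb Hb'; rewrite !inE => /andP [Hbc Hb] /andP [Hbc' Hb'].
  move: HS; apply/negP; apply: (@twin_notfix _ _ (inr b) (inr b')) => //.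
  - apply: twin_aut => //; first by rewrite /= /e !eqxx.
    move=> [x|x] H1 H2 /=.
      by rewrite (eq_sym c) (eq_sym c) (negbTE Hbc) (negbTE Hbc').
    rewrite eq_rr in H1; rewrite eq_rr in H2.
    by rewrite /e (eq_sym b) (eq_sym b') (negbTE H1) (negbTE H2).
have Hsub : ~: S \subset (inl @: SA :|: inr @: SB) :|: [set inr c].
  apply/subsetP => -[x|x]; rewrite inE => Hx.
    apply/setUP; left; apply/setUP; left; apply/imsetP; exists x => //.
    by rewrite inE.
  case: (eqVneq x c) => [->|Hxc]; first by apply/setUP; right; rewrite inE.
  apply/setUP; left; apply/setUP; right; apply/imsetP; exists x => //.
  by rewrite inE Hxc.
have H1 := subset_leq_card Hsub.
have H2 := leq_cardU (inl @: SA :|: inr @: SB) [set inr c].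
have H3 := leq_cardU (inl @: SA) (inr @: SB).
have H4 := leq_imset_card (@inl 'I_n 'I_n) SA.
have H5 := leq_imset_card (@inr 'I_n 'I_n) SB.
have H6 := cardsC S.
move: H6; rewrite card_sum card_ord => H6.
have H7 := cards1 (inr c : ('I_n + 'I_n)%type).
have Hc3 : #|~: S| <= 3.
  apply: (leq_trans H1); apply: (leq_trans H2); rewrite H7 -[3]/(2+1) leq_add2r.
  apply: (leq_trans H3); rewrite -[2]/(1+1); apply: leq_add; [exact: leq_trans H4 HA | exact: leq_trans H5 HB].
clear -Hc3 H6 Hlt Hn. lia.
Qed.


Lemma pfix (T : finType) (r : rel T) (p : {perm T}) (P : pred T) u w :
  is_aut r p -> p u = u -> (forall x, ~~ P x -> p x = x) -> r u w ->
  (forall v, r u v -> P v -> v = w) -> p w = w.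
Proof.
move=> Ha Hu Hf Hw Hun; case Hpw: (P (p w)).
  by apply: Hun => //; rewrite -{1}Hu aut_rel.
by have := Hf _ (negbT Hpw); move/perm_inj.
Qed.

Section Rigid.
Variable m : nat.
Definition pe : rel 'I_(m.+3) := fun i j => (i.+1 == j) || (j.+1 == i).
Definition pg (i : 'I_(m.+3)) : 'I_(m.+3) := if i < m.+2 then ord_max else inord m.+1.
Definition R := functigraph pe pg.

Lemma pg_val i : (pg i : nat) = if i < m.+2 then m.+2 else m.+1.
Proof. by rewrite /pg; case: ifP => // _; rewrite inordK. Qed.

Lemma pgE i (k : 'I_(m.+3)) : (pg i == k) = (val k == if i < m.+2 then m.+2 else m.+1).
Proof. by rewrite -val_eqE /= pg_val eq_sym. Qed.

Lemma pe_conn : connected_graph pe.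
Proof.
have Hs : symmetric pe by move=> x y; rewrite /pe orbC.
split => //; split; first by move=> x; rewrite /pe; lia.
have H0 : forall k (Hk : k < m.+3), connect pe ord0 (Ordinal Hk).
  elim=> [|k IH] Hk; first by have -> : Ordinal Hk = ord0 by apply: val_inj.
  apply: connect_trans (IH (ltnW Hk)) _; apply: connect1; rewrite /pe /=; lia.
move=> x y; apply: connect_trans (_ : connect pe x ord0) _.
  rewrite (sym_connect_sym Hs); case: x => x Hx; exact: H0.
case: y => y Hy; exact: H0.
Qed.

Definition ob (k : nat) : 'I_(m.+3) := inord k.
Lemma obK k : k < m.+3 -> (ob k : nat) = k.
Proof. exact: inordK. Qed.

Lemma leaf0 x : R (inr ord0) x -> x = inr (ob 1).
Proof.
case: x => [a|b] /=; first by rewrite pgE /=; case: ifP.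
rewrite /pe /= => H; congr inr; apply: val_inj; rewrite /= obK //; lia.
Qed.

Lemma two_nbrs v : v != inr ord0 -> exists x1 x2, [/\ x1 != x2, R v x1 & R v x2].
Proof.
case: v => [a|b] Hv.
  case: (ltnP a m.+2) => Ha.
    exists (inl (ob a.+1)), (inr (pg a)); split => //=.
    by rewrite /pe obK //; lia.
  exists (inl (ob a.-1)), (inr (pg a)); split => //=.
  rewrite /pe obK; last by have := ltn_ord a; lia.
  by rewrite prednK ?eqxx ?orbT //; lia.
have Hb : 0 < b.
  rewrite lt0n; apply: contra Hv => /eqP Hb; apply/eqP; congr inr; exact: val_inj.
have Hbm := ltn_ord b.
case: (ltnP b m.+2) => Hb2.
  exists (inr (ob b.-1)), (inr (ob b.+1)); split => /=.
  - rewrite eq_rr -val_eqE /= !obK; lia.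
  - rewrite /pe !obK; lia.
  - rewrite /pe !obK; lia.
exists (inr (ob b.-1)), (inl ord0); split => //=.
  rewrite /pe obK; lia.
rewrite pgE /=; lia.
Qed.

Lemma seed p : is_aut R p -> p (inr ord0) = inr ord0.
Proof.
move=> Ha; apply/eqP/negPn/negP => Hv.
have [x1 [x2 [Hne H1 H2]]] := two_nbrs Hv.
have E : forall x, R (p (inr ord0)) x -> (p^-1)%g x = inr (ob 1).
  move=> x Hx; apply: leaf0; by rewrite -(aut_rel (inr ord0) ((p^-1)%g x) Ha) permKV.
have := E _ H1; rewrite -(E _ H2) => /perm_inj E'.
by rewrite E' eqxx in Hne.
Qed.

Lemma chainB p : is_aut R p -> forall k, k <= m.+1 ->
  forall j : 'I_(m.+3), j <= k -> p (inr j) = inr j.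
Proof.
move=> Ha; elim=> [|k IH] Hk j Hj.
  have -> : j = ord0 by apply: val_inj => /=; lia.
  exact: seed.
case: (ltnP j k.+1) => Hjk; first by apply: IH => //; lia.
have -> : j = ob k.+1 by apply: val_inj; rewrite /= obK; lia.
apply: (@pfix _ R p (fun v => if v is inr j then k < j else true) (inr (ob k)) (inr (ob k.+1))) => //.
- apply: IH; [lia | rewrite obK; lia].
- by move=> [a|b] //= Hb; apply: IH; lia.
- rewrite /= /pe !obK; lia.
- move=> [a|b] /=.
    by rewrite pgE /= obK; [case: ifP; lia | lia].
  rewrite /pe obK; last lia.
  by move=> H1 H2; congr inr; apply: val_inj; rewrite /= obK; lia.
Qed.

Lemma topB p : is_aut R p ->
  p (inl ord_max) = inl ord_max /\ p (inr ord_max) = inr ord_max.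
Proof.
move=> Ha.
have FB := chainB Ha (leqnn m.+1).
have Nb : forall x, R (inr (ob m.+1)) x -> [\/ x = inl ord_max, x = inr ord_max |
    exists2 j : 'I_(m.+3), j <= m.+1 & x = inr j].
  move=> [a|b] /=.
    rewrite pgE /= obK //; case: ifP => Ha2; first lia.
    by move=> _; apply: Or31; congr inl; apply: val_inj => /=; have := ltn_ord a; lia.
  rewrite /pe obK // => H.
  case: (leqP b m.+1) => Hb; first by apply: Or33; exists b.
  by apply: Or32; congr inr; apply: val_inj => /=; have := ltn_ord b; lia.
have Hsec : p (inr (ob m.+1)) = inr (ob m.+1) by apply: FB; rewrite obK.
have Img : forall y, y = inl ord_max \/ y = inr ord_max ->
    p y = inl ord_max \/ p y = inr ord_max.
  move=> y Hy.
  have : R (inr (ob m.+1)) (p y).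
    rewrite -Hsec aut_rel //; case: Hy => -> /=; first by rewrite pgE /= ltnn obK.
    by rewrite /pe obK //= eqxx.
  case/Nb => [->|->|[j Hj E]]; [by left | by right|].
  have := FB j Hj; rewrite -E => /perm_inj E'.
  rewrite E' in E; case: Hy => E2; rewrite E2 in E; first by [].
  by case: E => E3; move: Hj; rewrite -E3 /=; lia.
case: (Img (inl ord_max) (or_introl erefl)) => H1.
  split => //; case: (Img (inr ord_max) (or_intror erefl)) => // H2.
  by move: (etrans H2 (esym H1)) => /perm_inj.
exfalso.
have H2 : p (inr ord_max) = inl ord_max.
  case: (Img (inr ord_max) (or_intror erefl)) => // H2.
  by move: (etrans H2 (esym H1)) => /perm_inj.
have N0 : forall i : 'I_(m.+3), i < m.+2 -> p (inl i) = inl (ob m.+1).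
  move=> i Hi.
  have : R (inl ord_max) (p (inl i)) by rewrite -H2 aut_rel //= pgE /= Hi.
  case E: (p (inl i)) => [a|b] /=.
    rewrite /pe /= => H; congr inl; apply: val_inj; rewrite /= obK //; have := ltn_ord a; lia.
  rewrite pgE /= ltnn => /eqP Eb.
  have Eb' : b = ob m.+1 by apply: val_inj; rewrite /= obK.
  by move: E; rewrite Eb' -Hsec => /perm_inj.
have := N0 ord0 isT; rewrite -(N0 (ob 1)); last by rewrite obK.
by move/perm_inj => -[] /(congr1 val) /=; rewrite obK.
Qed.

Lemma allB p : is_aut R p -> forall j, p (inr j) = inr j.
Proof.
move=> Ha j; case: (leqP j m.+1) => Hj; first by have := chainB Ha (leqnn m.+1); apply.
have -> : j = ord_max by apply: val_inj => /=; have := ltn_ord j; lia.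
by case: (topB Ha).
Qed.

Lemma chainA p : is_aut R p -> forall d, d <= m.+2 ->
  forall i : 'I_(m.+3), m.+2 - d <= i -> p (inl i) = inl i.
Proof.
move=> Ha; elim=> [|d IH] Hd i Hi.
  have -> : i = ord_max by apply: val_inj => /=; have := ltn_ord i; lia.
  by case: (topB Ha).
case: (leqP (m.+2 - d) i) => Hid; first by apply: IH => //; lia.
have -> : i = ob (m.+1 - d) by apply: val_inj; rewrite /= obK; lia.
apply: (@pfix _ R p (fun v => if v is inl a then a < m.+2 - d else false)
          (inl (ob (m.+2 - d))) (inl (ob (m.+1 - d)))) => //.
- apply: IH; [lia | rewrite obK; lia].
- move=> [a|b] /= H; last exact: allB.
  by apply: IH; lia.
- rewrite /= /pe !obK; lia.
- move=> [a|b] //=; rewrite /pe obK; last lia.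
  by move=> H1 H2; congr inl; apply: val_inj; rewrite /= obK; lia.
Qed.

Lemma rigid : fixing_set R set0.
Proof.
apply: fixing_setP => p Ha _ [i|j]; last exact: allB.
apply: (chainA Ha (leqnn _)); lia.
Qed.

End Rigid.

Theorem proposition2p5 :
  (forall (n : nat) (e : rel 'I_n) (g : 'I_n -> 'I_n),
      3 <= n -> connected_graph e ->
      0 <= fix_number (functigraph e g) <= 2 * n - 3)
  /\
  (forall n : nat, 3 <= n ->
      (exists (e : rel 'I_n) (g : 'I_n -> 'I_n),
          connected_graph e /\ fix_number (functigraph e g) = 0)
      /\
      (exists (e : rel 'I_n) (g : 'I_n -> 'I_n),
          connected_graph e /\ fix_number (functigraph e g) = 2 * n - 3)).
Proof.
split.
  move=> n e g Hn Hc; apply/andP; split => //; exact: upper.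
move=> n Hn; split; last exact: ex_max.
case: n Hn => [|[|[|m]]] // _.
exists (@pe m), (@pg m); split; first exact: (@pe_conn m).
by have := fix_le (@rigid m); rewrite cards0 leqn0 => /eqP.
Qed.
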